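(* Let $(\ell_{i:n})_{0\le i\le n\le m}$ be reals with $\ell_{0:n}=-1$, $n\mapsto\ell_{i:n}$ nonincreasing and $i\mapsto\ell_{i:n}$ nondecreasing, and let $\varphi_A=\max_{1\le i\le|A|}\mathbf 1\{p_{(i:A)}\le\ell_{i:|A|}\}$ ($\varphi_\emptyset=0$). Assume this is a family of local tests at level $\alpha$: for all $\mu\in\mathfrak F$, $\mathbb P_\mu(\varphi_{\mathcal H_0(\mu)}=1)\le\alpha$. Let $$\hat m_0=\max\{n\in\{0,\dots,m\}:\forall t\in[0,1],\ t>\ell_{((n+i(t)-m)\vee0):n}\},$$ and the reference family $\mathfrak R=(R_k,k-1)_{1\le k\le\hat m_0+1}$ with $R_k=\{i:p_i\le\ell_{k:\hat m_0}\}$ for $1\le k\le\hat m_0$ and $R_{\hat m_0+1}=\{1,\dots,m\}$. Then $\mathrm{JER}_\mu(\mathfrak R)\le\alpha$ for all $\mu\in\mathfrak F$, and $\hat V^{\mathrm{IP}}_\varphi(S)=\hat V^{\mathrm{JER}}_{\mathfrak R}(S)$ for all $S\subseteq\{1,\dots,m\}$.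
   Context: Data $X\sim\mu\in\mathfrak F$, null hypotheses $H_1,\dots,H_m\subseteq\mathfrak F$, $\mathcal H_0(\mu)=\{i:\mu\in H_i\}$, $p$-values $p_i\in[0,1]$; $p_{(i:A)}$ is the $i$-th smallest of $(p_j)_{j\in A}$; $i(t)=\#\{j:p_j\le t\}$. Inversion bound: $\hat V^{\mathrm{IP}}_\varphi(S)=\max\{|A\cap S|:A\subseteq\{1,\dots,m\},\varphi_A=0\}$. For a reference family $\mathfrak R=(R_k,\zeta_k)_{k\in\mathcal K}$: $\mathrm{JER}_\mu(\mathfrak R)=\mathbb P_\mu(\exists k:|R_k\cap\mathcal H_0(\mu)|>\zeta_k)$, $\mathfrak A(\mathfrak R)=\{A\subseteq\{1,\dots,m\}:\forall k,\ |R_k\cap A|\le\zeta_k\}$, $\hat V^{\mathrm{JER}}_{\mathfrak R}(S)=\max_{A\in\mathfrak A(\mathfrak R)}|S\cap A|$. *)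

(* Defs.v *)
From HB Require Import structures.
From mathcomp Require Import all_boot all_order all_algebra.
From mathcomp Require Import all_classical all_reals all_analysis.
Set Implicit Arguments. Unset Strict Implicit. Unset Printing Implicit Defensive.
Import Order.TTheory GRing.Theory Num.Theory.
Local Open Scope ring_scope.

Section Defs.
Variables (R : realType) (m : nat).
Implicit Types (p : 'I_m -> R) (A S : {set 'I_m}).

(* p_{(i:A)}: the i-th smallest (i >= 1) of (p_j)_{j in A} *)
Definition ordstat p A (i : nat) : R :=
  nth 0 (sort <=%R [seq p j | j <- enum A]) i.-1.

Definition icount p (t : R) : nat := #|[set j | p j <= t]|.

Definition phi (l : nat -> nat -> R) p A : bool :=
  has (fun i => ordstat p A i <= l i #|A|) (iota 1 #|A|).

Definition H0 (F : Type) (H : 'I_m -> F -> Prop) (mu : F) : {set 'I_m} :=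
  [set i | `[< H i mu >]].

Definition VIP (ph : {set 'I_m} -> bool) S : nat :=
  (\max_(A : {set 'I_m} | ~~ ph A) #|A :&: S|)%N.

(* reference family (R_k, zeta_k)_k as a finite list of pairs *)
Definition refFamily := seq ({set 'I_m} * nat).

Definition JER_event (Rf : refFamily) (H0set : {set 'I_m}) : bool :=
  has (fun kz => #|kz.1 :&: H0set| > kz.2)%N Rf.

Definition in_frakA (Rf : refFamily) A : bool :=
  all (fun kz => #|kz.1 :&: A| <= kz.2)%N Rf.

Definition VJER (Rf : refFamily) S : nat :=
  (\max_(A : {set 'I_m} | in_frakA Rf A) #|S :&: A|)%N.

Definition mhat0 (l : nat -> nat -> R) p : nat :=
  (\max_(n < m.+1 | `[< forall t : R, (0 <= t <= 1)%R ->
        (l (n + icount p t - m)%N n < t)%R >]) n)%N.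

Definition Rk (l : nat -> nat -> R) p (k : nat) : {set 'I_m} :=
  if (k <= mhat0 l p)%N then [set i | p i <= l k (mhat0 l p)] else [set: 'I_m]%SET.

Definition refFam (l : nat -> nat -> R) p : refFamily :=
  [seq (Rk l p k, k.-1) | k <- iota 1 (mhat0 l p).+1].

End Defs.

(* Main.v *)
Require Import Defs.
From HB Require Import structures.
From mathcomp Require Import all_boot all_order all_algebra.
From mathcomp Require Import all_classical all_reals all_analysis.
From mathcomp Require Import zify.
Import Order.TTheory GRing.Theory Num.Theory.
Set Implicit Arguments. Unset Strict Implicit.
Local Open Scope ring_scope.

Definition lhyp (R : realType) (m : nat) (l : nat -> nat -> R) :=
  [/\ (forall n, (n <= m)%N -> l 0%N n = -1),
   (forall i n n', (i <= n)%N -> (n <= n')%N -> (n' <= m)%N -> l i n' <= l i n) &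
   (forall i i' n, (i <= i')%N -> (i' <= n)%N -> (n <= m)%N -> l i n <= l i' n)].
Definition pbd (R : realType) (m : nat) (p : 'I_m -> R) := forall i, 0 <= p i <= 1.
Definition Cprop (R : realType) (m : nat) (l : nat -> nat -> R) (p : 'I_m -> R) n :=
  forall t : R, 0 <= t <= 1 -> l (n + icount p t - m)%N n < t.
Definition Cnt (R : realType) (m : nat) (l : nat -> nat -> R) (p : 'I_m -> R) n :=
  forall j, (0 < j <= n)%N -> (icount p (l j n) < m - n + j)%N.

Lemma icount_le_m (R : realType) (m : nat) (p : 'I_m -> R) t : (icount p t <= m)%N.
Proof. by apply: leq_trans (max_card _) _; rewrite card_ord. Qed.

Lemma icount_mono (R : realType) (m : nat) (p : 'I_m -> R) s t :
  s <= t -> (icount p s <= icount p t)%N.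
Proof.
move=> st; apply: subset_leq_card; apply/fintype.subsetP=> i; rewrite !inE => h.
exact: le_trans h st.
Qed.

Lemma icount_neg (R : realType) (m : nat) (p : 'I_m -> R) t :
  pbd p -> t < 0 -> icount p t = 0%N.
Proof.
move=> hp t0; apply/eqP; rewrite cards_eq0; apply/eqP/setP=> i; rewrite !inE.
apply/negbTE; rewrite -ltNge; case/andP: (hp i) => h _; exact: lt_le_trans t0 h.
Qed.

Lemma icount_one (R : realType) (m : nat) (p : 'I_m -> R) :
  pbd p -> icount p 1 = m.
Proof.
move=> hp; rewrite /icount (_ : [set j | p j <= 1] = [set: 'I_m]%SET) ?cardsT ?card_ord //.
by apply/finset.setP=> i; rewrite !inE; case/andP: (hp i).
Qed.

Lemma C_iff (R : realType) (m : nat) (l : nat -> nat -> R) (p : 'I_m -> R) n :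
  lhyp m l -> pbd p -> (n <= m)%N -> Cprop l p n <-> Cnt l p n.
Proof.
case=> hl0 hln hli hp nm; split.
  move=> hC j /andP[j0 jn]; rewrite ltnNge; apply/negP => hc.
  have [lneg|lpos] := ltP (l j n) 0.
    by move: hc; rewrite icount_neg //; lia.
  pose t := if l j n <= 1 then l j n else 1.
  have t01 : 0 <= t <= 1.
    by rewrite /t; case: ifP => h; rewrite ?h ?lpos ?ler01 ?lexx.
  have ct : (m - n + j <= icount p t)%N.
    rewrite /t; case: ifP => // _; rewrite icount_one //; lia.
  have tl : t <= l j n.
    by rewrite /t; case: ifP => // h; rewrite ltW // ltNge h.
  have := hC t t01.
  have jj : (j <= n + icount p t - m)%N by lia.
  have jn' : (n + icount p t - m <= n)%N by have := icount_le_m p t; lia.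
  have := hli _ _ _ jj jn' nm.
  move=> h1 h2; have := le_lt_trans (le_trans tl h1) h2; by rewrite ltxx.
move=> hN t /andP[t0 t1].
case E: (n + icount p t - m)%N => [|j].
  by rewrite hl0 // (lt_le_trans _ t0) // ltrN10.
rewrite ltNge; apply/negP => h.
have jn : (0 < j.+1 <= n)%N by have := icount_le_m p t; lia.
have := hN _ jn; have := icount_mono p h; lia.
Qed.
Definition cnt (R : realType) (m : nat) (p : 'I_m -> R) (A : {set 'I_m}) (c : R) : nat :=
  #|[set j in A | p j <= c]|.

Lemma count_enumA (T : finType) (A : {set T}) (P : pred T) :
  count P (enum A) = #|[set j in A | P j]|.
Proof.
rewrite cardE -size_filter; apply/perm_size/uniq_perm.
- by apply: filter_uniq; apply: enum_uniq.
- exact: enum_uniq.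
by move=> x; rewrite mem_filter !mem_enum inE andbC.
Qed.

Lemma ordstat_le (R : realType) (m : nat) (p : 'I_m -> R) (A : {set 'I_m}) k c :
  (0 < k <= #|A|)%N -> (ordstat p A k <= c) = (k <= cnt p A c)%N.
Proof.
case/andP=> k0 kA.
set s := sort <=%R [seq p j | j <- enum A].
have ss : sorted <=%R s by apply: sort_sorted; exact: le_total.
have szs : size s = #|A| by rewrite size_sort size_map cardE.
have cs : count (fun x => x <= c) s = cnt p A c.
  by rewrite (permP (permEl (perm_sort _ _))) count_map count_enumA.
rewrite /ordstat -/s -cs.
case: k k0 kA => // k _ kA /=.
apply/idP/idP => h.
  rewrite ltnNge; apply/negP=> h2.
  have := @nth_count_gt _ _ c 0 s k ss.
  by rewrite h2 szs kA /= => /(_ isT); rewrite ltNge h.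
exact: nth_count_le.
Qed.

Lemma phi_cnt (R : realType) (m : nat) (l : nat -> nat -> R) (p : 'I_m -> R) A :
  phi l p A = has (fun i => i <= cnt p A (l i #|A|))%N (iota 1 #|A|).
Proof.
apply: eq_in_has => i; rewrite mem_iota => /andP[i1 i2].
apply: ordstat_le; rewrite i1 /=; by rewrite add1n ltnS in i2.
Qed.

Lemma C0 (R : realType) (m : nat) (l : nat -> nat -> R) (p : 'I_m -> R) :
  lhyp m l -> Cprop l p 0.
Proof.
case=> hl0 _ _ t /andP[t0 _].
have -> : (0 + icount p t - m = 0)%N by have := icount_le_m p t; lia.
by rewrite hl0 // (lt_le_trans _ t0) // ltrN10.
Qed.

Lemma mhat0_le (R : realType) (m : nat) (l : nat -> nat -> R) (p : 'I_m -> R) :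
  (mhat0 l p <= m)%N.
Proof. by apply/bigmax_leqP => i _; rewrite -ltnS. Qed.

Lemma mhat0_C (R : realType) (m : nat) (l : nat -> nat -> R) (p : 'I_m -> R) :
  lhyp m l -> Cprop l p (mhat0 l p).
Proof.
move=> hl; rewrite /mhat0.
have : (0 < #|(fun n : 'I_m.+1 => `[< Cprop l p n >])|)%N.
  apply/card_gt0P; exists ord0; rewrite /in_mem /=; apply/asboolP; exact: C0.
move=> /(eq_bigmax_cond (fun n : 'I_m.+1 => nat_of_ord n)) [i0 Hi ->].
by move: Hi; rewrite /in_mem /= => /asboolP.
Qed.

Lemma mhat0_ge (R : realType) (m : nat) (l : nat -> nat -> R) (p : 'I_m -> R) n :
  (n <= m)%N -> Cprop l p n -> (n <= mhat0 l p)%N.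
Proof.
rewrite -ltnS => nm hC.
by apply: (@leq_bigmax_cond _ _ (fun n : 'I_m.+1 => nat_of_ord n) (Ordinal nm)); apply/asboolP.
Qed.

Lemma card_split (T : finType) (A S : {set T}) :
  (#|S| <= #|S :&: A| + #|~: A|)%N.
Proof.
rewrite -(cardsID A S); rewrite leq_add2l; apply: subset_leq_card.
by apply/fintype.subsetP => x; rewrite !inE => /andP[].
Qed.

Lemma cnt_setI (R : realType) (m : nat) (p : 'I_m -> R) A c :
  cnt p A c = #|[set i | p i <= c] :&: A|.
Proof. by rewrite /cnt; apply: eq_card => i; rewrite !inE andbC. Qed.

Lemma card_ordset (m : nat) (A : {set 'I_m}) : (#|A| <= m)%N.
Proof. by apply: leq_trans (max_card _) _; rewrite card_ord. Qed.

Lemma cardC_ord (m : nat) (A : {set 'I_m}) : #|~: A| = (m - #|A|)%N.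
Proof. by rewrite [in RHS](cardsCs A) card_ord; have := card_ordset (~: A); lia. Qed.

Lemma phi0_frakA (R : realType) (m : nat) (l : nat -> nat -> R) (p : 'I_m -> R) A :
  lhyp m l -> pbd p -> ~~ phi l p A -> in_frakA (refFam l p) A.
Proof.
move=> hl hp; have [hl0 hln hli] := hl.
rewrite phi_cnt -all_predC => /allP hA.
set m0 := #|A|.
have m0m : (m0 <= m)%N by exact: card_ordset.
have hA' k : (0 < k <= m0)%N -> (cnt p A (l k m0) < k)%N.
  move=> /andP[k0 km]; have := hA k; rewrite mem_iota k0 add1n ltnS km /=.
  by move=> /(_ isT); rewrite -ltnNge.
have CA : Cnt l p m0.
  move=> j jm; have := hA' j jm; rewrite cnt_setI => h.
  rewrite /icount; apply: leq_ltn_trans (card_split A _) _.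
  rewrite cardC_ord -/m0; move: h jm m0m.
  set a := #|_ :&: A|; lia.
have m0n : (m0 <= mhat0 l p)%N.
  by apply: mhat0_ge => //; exact: ((C_iff hl hp m0m).2 CA).
have nm := mhat0_le l p.
rewrite /in_frakA /refFam all_map; apply/allP => k; rewrite mem_iota add1n ltnS.
move=> /andP[k0 kn] /=; rewrite /Rk.
case: ifP => kn'; last first.
  by rewrite finset.setTI -/m0; move: m0n kn (negbT kn'); lia.
have [km0|km0] := leqP k m0; last first.
  by apply: leq_trans (subset_leq_card (subsetIr _ _)) _; rewrite -/m0; lia.
have := hA' k; rewrite k0 km0 => /(_ isT); rewrite cnt_setI => h.
rewrite -ltnS prednK //; apply: leq_ltn_trans h; apply: subset_leq_card.
apply/fintype.subsetP => i; rewrite !inE => /andP[h1 ->]; rewrite andbT.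
exact: le_trans h1 (hln _ _ _ km0 m0n nm).
Qed.

Definition Pgood (R : realType) (m : nat) (l : nat -> nat -> R) (p : 'I_m -> R) n
  (A : {set 'I_m}) :=
  forall k, (0 < k <= n)%N -> (#|[set i | (p i <= l k n)%R] :&: A| < k)%N.

Lemma frakA_prop (R : realType) (m : nat) (l : nat -> nat -> R) (p : 'I_m -> R) A :
  in_frakA (refFam l p) A -> (#|A| <= mhat0 l p)%N /\ Pgood l p (mhat0 l p) A.
Proof.
rewrite /in_frakA /refFam all_map => /allP hA; split.
  have := hA (mhat0 l p).+1; rewrite mem_iota add1n leqnn /= => /(_ isT).
  by rewrite /Rk ltnn finset.setTI.
move=> k /andP[k0 kn]; have := hA k; rewrite mem_iota k0 add1n ltnS (leq_trans kn) //=.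
move=> /(_ isT); rewrite /Rk kn => h; move: h k0; set a := #|_|; lia.
Qed.

Lemma exists_max (m : nat) (R : realType) (p : 'I_m -> R) (B : {set 'I_m}) x0 :
  x0 \in B -> exists2 x, x \in B & forall y, y \in B -> p y <= p x.
Proof.
move=> xB; case: (@arg_maxP _ _ _ x0 (mem B) p xB) => x xB' hx.
by exists x.
Qed.

Lemma ext_good (R : realType) (m : nat) (l : nat -> nat -> R) (p : 'I_m -> R) r (A : {set 'I_m}) :
  lhyp m l -> pbd p -> (mhat0 l p - #|A| = r)%N -> (#|A| <= mhat0 l p)%N ->
  Pgood l p (mhat0 l p) A ->
  exists A' : {set 'I_m}, [/\ A \subset A', #|A'| = mhat0 l p & Pgood l p (mhat0 l p) A'].
Proof.
move=> hl hp; set n := mhat0 l p.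
have nm : (n <= m)%N by exact: mhat0_le.
have CN : Cnt l p n by apply/(C_iff hl hp nm); exact: mhat0_C.
elim: r A => [|r IH] A hr hAn hg.
  exists A; split=> //; move: hr hAn; lia.
have An : (#|A| < n)%N by move: hr; lia.
have [x0 x0A] : exists x0, x0 \in ~: A.
  apply/set0Pn; rewrite -card_gt0 cardC_ord; move: An nm; lia.
have [x xA hx] := exists_max p x0A.
have xnA : x \notin A by rewrite inE in xA.
have e1 : (n - #|x |: A| = r)%N by rewrite cardsU1 xnA; move: hr; lia.
have e2 : (#|x |: A| <= n)%N by rewrite cardsU1 xnA.
have e3 : Pgood l p n (x |: A).
  move=> k /andP[k0 kn]; set S := [set i | p i <= l k n].
  have hk := hg k; rewrite k0 kn in hk; have {}hk := hk isT.
  have [pxS|pxS] := boolP (p x <= l k n); last first.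
    rewrite (_ : S :&: (x |: A) = S :&: A) //; apply/finset.setP => i.
    rewrite !inE; case: (eqVneq i x) => [->|] //=; by rewrite (negbTE pxS).
  have sub : ~: A \subset S.
    by apply/fintype.subsetP => y yA; rewrite inE (le_trans (hx y yA) pxS).
  have cS : #|S| = (#|S :&: A| + (m - #|A|))%N.
    rewrite -(cardsID A S) -cardC_ord; congr (_ + _)%N; apply: eq_card => i.
    rewrite !inE; case iA: (i \in A) => //=.
    by have := fintype.subsetP sub i; rewrite !inE iA => /(_ isT) ->.
  have := CN k; rewrite k0 kn => /(_ isT); rewrite /icount -/S cS => h.
  have h2 : (#|S :&: (x |: A)| <= #|S :&: A| + 1)%N.
    rewrite addn1 -add1n; apply: leq_trans (_ : #|x |: (S :&: A)| <= _)%N.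
      apply: subset_leq_card; apply/fintype.subsetP => i; rewrite !inE.
      by case: (i == x) => //=.
    by rewrite cardsU1 leq_add2r leq_b1.
  move: h h2 An nm; lia.
have [A' [h1 h2 h3]] := IH (x |: A) e1 e2 e3.
exists A'; split=> //; exact: (fintype.subset_trans (finset.subsetUr [set x] A) h1).
Qed.

Lemma good_phi0 (R : realType) (m : nat) (l : nat -> nat -> R) (p : 'I_m -> R) (A : {set 'I_m}) :
  #|A| = mhat0 l p -> Pgood l p (mhat0 l p) A -> ~~ phi l p A.
Proof.
move=> hA hg; rewrite phi_cnt -all_predC; apply/allP => i; rewrite mem_iota add1n ltnS.
move=> /andP[i0 iA] /=; rewrite -ltnNge cnt_setI hA; apply: hg; by rewrite i0 -hA iA.
Qed.

Lemma VIP_VJER (R : realType) (m : nat) (l : nat -> nat -> R) (p : 'I_m -> R) (S : {set 'I_m}) :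
  lhyp m l -> pbd p -> VIP (phi l p) S = VJER (refFam l p) S.
Proof.
move=> hl hp; apply/eqP; rewrite eqn_leq; apply/andP; split.
  apply/bigmax_leqP => A hA.
  rewrite /VJER; apply: leq_trans (@leq_bigmax_cond _ (fun A => in_frakA (refFam l p) A)
     (fun A => #|S :&: A|) A (phi0_frakA hl hp hA)).
  by rewrite finset.setIC.
apply/bigmax_leqP => A hA.
have [hn hg] := frakA_prop hA.
have [A' [h1 h2 h3]] := ext_good hl hp erefl hn hg.
rewrite /VIP; apply: leq_trans (@leq_bigmax_cond _ (fun A => ~~ phi l p A)
   (fun A => #|A :&: S|) A' (good_phi0 h2 h3)).
rewrite finset.setIC; apply: subset_leq_card; exact: finset.setSI.
Qed.

Lemma JER_frakA (m : nat) (Rf : refFamily m) (H : {set 'I_m}) : JER_event Rf H = ~~ in_frakA Rf H.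
Proof.
rewrite /JER_event /in_frakA -has_predC; apply: eq_has => kz /=.
by rewrite ltnNge.
Qed.

Definition agree (R : realType) (m : nat) (l : nat -> nat -> R) (p p' : 'I_m -> R) :=
  forall i k n, (k <= m)%N -> (n <= m)%N -> (p i <= l k n) = (p' i <= l k n).

Lemma icount_agree (R : realType) (m : nat) (l : nat -> nat -> R) (p p' : 'I_m -> R) k n :
  agree l p p' -> (k <= m)%N -> (n <= m)%N -> icount p (l k n) = icount p' (l k n).
Proof. by move=> ha km nm; apply: eq_card => i; rewrite !inE ha. Qed.

Lemma phi_agree (R : realType) (m : nat) (l : nat -> nat -> R) (p p' : 'I_m -> R)
  (A : {set 'I_m}) : agree l p p' -> phi l p A = phi l p' A.
Proof.
move=> ha; rewrite !phi_cnt; apply: eq_in_has => i; rewrite mem_iota add1n ltnS.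
move=> /andP[_ iA]; have Am := card_ordset A.
by rewrite /cnt; congr (_ <= _)%N; apply: eq_card => j; rewrite !inE ha //; apply: leq_trans Am.
Qed.

Lemma Cprop_agree (R : realType) (m : nat) (l : nat -> nat -> R) (p p' : 'I_m -> R) n :
  lhyp m l -> pbd p -> pbd p' -> agree l p p' -> (n <= m)%N -> Cprop l p n -> Cprop l p' n.
Proof.
move=> hl hp hp' ha nm /(C_iff hl hp nm) hC; apply/(C_iff hl hp' nm) => j jn.
rewrite -(icount_agree ha) //; first exact: hC.
by case/andP: jn => _ jn; apply: leq_trans nm.
Qed.

Lemma mhat0_agree (R : realType) (m : nat) (l : nat -> nat -> R) (p p' : 'I_m -> R) :
  lhyp m l -> pbd p -> pbd p' -> agree l p p' -> mhat0 l p = mhat0 l p'.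
Proof.
move=> hl hp hp' ha; rewrite /mhat0; apply: eq_bigl => n.
have nm : (n <= m)%N by rewrite -ltnS.
have ha' : agree l p' p by move=> i k n' km n'm; rewrite ha.
by apply/asboolP/asboolP; apply: Cprop_agree.
Qed.

Lemma refFam_agree (R : realType) (m : nat) (l : nat -> nat -> R) (p p' : 'I_m -> R) :
  lhyp m l -> pbd p -> pbd p' -> agree l p p' -> refFam l p = refFam l p'.
Proof.
move=> hl hp hp' ha; rewrite /refFam /Rk -(mhat0_agree hl hp hp' ha).
have nm := mhat0_le l p.
apply: eq_map => k; case: ifP => // kn; congr (_, _); apply/finset.setP => i.
by rewrite !inE ha // (leq_trans kn).
Qed.

Local Open Scope classical_set_scope.
Lemma meas_atom (d : measure_display) (Omega : measurableType d) (R : realType)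
  (f : Omega -> R) (c : R) : measurable_fun setT f ->
  measurable [set w | f w <= c].
Proof.
move=> mf.
have := mf measurableT _ (measurable_itv `]-oo, c]%R).
rewrite setTI.
congr (measurable _); apply/seteqP; split=> w /=; rewrite /preimage /= in_itv /=; done.
Qed.

Lemma meas_inv (d : measure_display) (Omega : measurableType d) (R : realType)
  (I : eqType) (g : I -> Omega -> R) (mg : forall i, measurable_fun setT (g i))
  (X : seq (I * R)) (Q : Omega -> Prop) :
  (forall w w', (forall x, x \in X -> (g x.1 w <= x.2) = (g x.1 w' <= x.2)) ->
     Q w -> Q w') -> measurable [set w | Q w].
Proof.
elim: X Q => [|x X IH] Q HQ.
  have [[w0 Qw0]|nQ] := pselect (exists w, Q w).
    rewrite (_ : [set w | Q w] = setT); first exact: measurableT.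
    by apply/seteqP; split=> // w _; apply: (HQ w0).
  rewrite (_ : [set w | Q w] = set0); first exact: measurable0.
  by apply/seteqP; split=> // w Qw; apply: nQ; exists w.
pose agr w w' := forall y, y \in X -> (g y.1 w <= y.2) = (g y.1 w' <= y.2).
pose Q1 (b : bool) w := exists w0, (g x.1 w0 <= x.2) = b /\ Q w0 /\ agr w0 w.
have mQ1 b : measurable [set w | Q1 b w].
  apply: IH => w w' hww' [w0 [h1 [h2 h3]]]; exists w0; split=> //; split=> //.
  by move=> y yX; rewrite h3 // hww'.
have mA := @meas_atom _ _ _ _ x.2 (mg x.1).
rewrite (_ : [set w | Q w] = ([set w | g x.1 w <= x.2] `&` [set w | Q1 true w])
   `|` (~` [set w | g x.1 w <= x.2] `&` [set w | Q1 false w])).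
  apply: measurableU; apply: measurableI => //; exact: measurableC.
apply/seteqP; split=> w /=.
  move=> Qw; case E: (g x.1 w <= x.2); [left|right]; split=> //;
   exists w; (split; [exact: E | split=> //]).
have key : forall b w0, (g x.1 w0 <= x.2) = b -> (g x.1 w <= x.2) = b -> agr w0 w -> Q w0 -> Q w.
  move=> b w0 h0 h h3; apply: HQ => y; rewrite inE => /orP [/eqP ->|yX].
    by rewrite h0 h.
  by apply: h3.
case=> [[h [w0 [h1 [h2 h3]]]]|[h [w0 [h1 [h2 h3]]]]].
  by apply: (key true w0).
apply: (key false w0) => //; by apply/negbTE/negP.
Qed.

Unset Implicit Arguments. Set Strict Implicit.

Theorem mainTheorem9 (R : realType) (d : measure_display) (Omega : measurableType d)
  (F : Type) (P : F -> probability Omega R) (m : nat)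
  (H : 'I_m -> F -> Prop) (p : 'I_m -> Omega -> R)
  (l : nat -> nat -> R) (alpha : R) :
  (forall i, measurable_fun setT (p i)) ->
  (forall i w, 0 <= p i w <= 1) ->
  (forall n, (n <= m)%N -> l 0%N n = -1) ->
  (forall i n n', (i <= n)%N -> (n <= n')%N -> (n' <= m)%N -> l i n' <= l i n) ->
  (forall i i' n, (i <= i')%N -> (i' <= n)%N -> (n <= m)%N -> l i n <= l i' n) ->
  (forall mu : F,
     (P mu [set w | phi l (fun j => p j w) (H0 H mu)] <= alpha%:E)%E) ->
  (forall mu : F,
     (P mu [set w | JER_event (refFam l (fun j => p j w)) (H0 H mu)] <= alpha%:E)%E)
  /\
  (forall (w : Omega) (S : {set 'I_m}),
     VIP (phi l (fun j => p j w)) S = VJER (refFam l (fun j => p j w)) S).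
Proof.
move=> mp hp hl0 hln hli hphi.
have hl : lhyp m l by split.
have pb w : pbd (fun j => p j w) by move=> i; exact: hp.
split; last by move=> w S; apply: VIP_VJER.
move=> mu.
pose X := [seq (i, l k.1 k.2) | i <- enum 'I_m,
             k <- [seq (a, b) | a <- iota 0 m.+1, b <- iota 0 m.+1]].
have agX w w' : (forall x, x \in X -> (p x.1 w <= x.2) = (p x.1 w' <= x.2)) ->
    agree l (fun j => p j w) (fun j => p j w').
  move=> h i k n km nm; apply: (h (i, l k n)).
  rewrite /X; apply/allpairsP; exists (i, (k, n)); split; first by rewrite mem_enum.
  - by apply/allpairsP; exists (k, n); rewrite !mem_iota /= !ltnS km nm.
  - by [].
have mJ : measurable [set w | JER_event (refFam l (fun j => p j w)) (H0 H mu)].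
  apply: (@meas_inv _ _ _ _ p mp X) => w w' h.
  by rewrite (refFam_agree hl (pb w) (pb w') (agX _ _ h)).
have mPhi : measurable [set w | phi l (fun j => p j w) (H0 H mu)].
  apply: (@meas_inv _ _ _ _ p mp X) => w w' h.
  by rewrite (phi_agree _ (agX _ _ h)).
apply: le_trans (hphi mu); apply: le_measure; rewrite ?inE //.
move=> w hJ.
have hJ' : ~~ in_frakA (refFam l (fun j => p j w)) (H0 H mu) by rewrite -JER_frakA; exact: hJ.
apply: (contraNT _ hJ') => nphi; exact: phi0_frakA.
Qed.
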